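(* Let $a>0$, $b\in\mathbb{R}$, and let $\mathcal{C}$ be an essential $f_{a,b}$-invariant circloid, with $L_1=\min_{z\in\mathcal{C}}\mathrm{pr}_2(z)$ and $L_2=\max_{z\in\mathcal{C}}\mathrm{pr}_2(z)$. Then $L_2-L_1\geq|b|$.
   Context: $\mathbb{A}=\mathbb{R}^2/\sim$ where $(x,y)\sim(x',y')$ iff $x-x'\in\mathbb{Z}$ and $y=y'$; $\mathrm{pr}_2$ the second coordinate. $f_{a,b}$ is the homeomorphism of $\mathbb{A}$ induced by $f_{a,b}(x,y)=\left(x+a\left[1-(y-b\sin(2\pi x))^2\right],\;y-b\sin(2\pi x)\right)$ (Non-Twist Standard Family). An annular continuum in $\mathbb{A}$ is a compact connected set $\mathcal{C}$ whose complement consists of exactly two disjoint essential open topological annuli, each a neighborhood of one of the two ends of $\mathbb{A}$. A circloid is an annular continuum not properly containing another annular continuum. *)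

(* Defs.v *)
From HB Require Import structures.
From mathcomp Require Import all_boot all_order all_algebra.
From mathcomp Require Import all_classical all_reals all_analysis.
Set Implicit Arguments. Unset Strict Implicit. Unset Printing Implicit Defensive.
Import Order.TTheory GRing.Theory Num.Theory.
Import numFieldNormedType.Exports.
Local Open Scope classical_set_scope.
Local Open Scope ring_scope.

Section Annulus.
Variable R : realType.

(* Model of the annulus A = R^2/~ as the cylinder S^1 x R embedded in R^3:
   the class of (x,y) is represented by ((cos 2 pi x, sin 2 pi x), y). *)
Definition pt := ((R * R) * R)%type.

Definition cyl (x y : R) : pt := ((cos (2 * pi * x), sin (2 * pi * x)), y).

Definition Ann : set pt := [set p | exists x y, p = cyl x y].

Definition pr2 (p : pt) : R := p.2.

Definition openA (U : set pt) : Prop :=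
  U `<=` Ann /\ exists O : set pt, open O /\ U = Ann `&` O.

Definition homeomorphic {T S : topologicalType} (A : set T) (B : set S) : Prop :=
  exists (f : T -> S) (g : S -> T),
    {within A, continuous f} /\ {within B, continuous g} /\
    (forall p, A p -> B (f p) /\ g (f p) = p) /\
    (forall q, B q -> A (g q) /\ f (g q) = q).

Definition unit_disk : set (R * R)%type :=
  [set p | p.1 ^+ 2 + p.2 ^+ 2 < 1].

Definition open_disk (D : set pt) : Prop := openA D /\ homeomorphic D unit_disk.

Definition open_annulus (U : set pt) : Prop :=
  openA U /\ connected U /\ homeomorphic U Ann.

Definition essential (U : set pt) : Prop :=
  ~ (exists D, open_disk D /\ U `<=` D).

Definition nbhd_upper_end (U : set pt) : Prop :=
  exists M : R, forall x y, M < y -> U (cyl x y).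

Definition nbhd_lower_end (U : set pt) : Prop :=
  exists M : R, forall x y, y < M -> U (cyl x y).

Definition annular_continuum (C : set pt) : Prop :=
  C `<=` Ann /\ compact C /\ connected C /\
  exists U V : set pt,
    Ann `\` C = U `|` V /\ U `&` V = set0 /\
    open_annulus U /\ open_annulus V /\ essential U /\ essential V /\
    nbhd_upper_end U /\ nbhd_lower_end V.

Definition circloid (C : set pt) : Prop :=
  annular_continuum C /\
  forall D, annular_continuum D -> D `<=` C -> D = C.

Definition essential_continuum (C : set pt) : Prop :=
  ~ (exists D, open_disk D /\ C `<=` D).

Definition Fab (a b x y : R) : R * R :=
  (x + a * (1 - (y - b * sin (2 * pi * x)) ^+ 2), y - b * sin (2 * pi * x)).

Definition fab_image (a b : R) (C : set pt) : set pt :=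
  [set p | exists x y, C (cyl x y) /\ p = cyl (Fab a b x y).1 (Fab a b x y).2].

Definition fab_invariant (a b : R) (C : set pt) : Prop := fab_image a b C = C.

Definition is_min_pr2 (C : set pt) (L : R) : Prop :=
  (exists p, C p /\ pr2 p = L) /\ (forall p, C p -> L <= pr2 p).

Definition is_max_pr2 (C : set pt) (L : R) : Prop :=
  (exists p, C p /\ pr2 p = L) /\ (forall p, C p -> pr2 p <= L).

End Annulus.

(* Main.v *)
Require Import Defs.
From mathcomp Require Import all_boot all_order all_algebra.
From mathcomp Require Import all_classical all_reals all_analysis.
From mathcomp Require Import ring lra.
Import Order.TTheory GRing.Theory Num.Theory.
Import numFieldNormedType.Exports.
Local Open Scope classical_set_scope.
Local Open Scope ring_scope.

Lemma gcont (R : realType) (c : R * R) : continuous (fun y : R => (c, y)).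
Proof. move=> y. have := @cvg_pair _ _ _ (nbhs y) (nbhs c) (nbhs y) _ _ _ (fun=> c) id (cvg_cst c) cvg_id. exact. Qed.

Lemma sin_quarter (R : realType) : sin (2 * pi * (1 / 4) : R) = 1.
Proof. have -> : 2 * pi * (1 / 4) = pi / 2 :> R by field. exact: sin_pihalf. Qed.

Theorem mainTheorem12 (R : realType) (a b : R) (C : set (pt R)) (L1 L2 : R) :
  0 < a ->
  essential_continuum C -> circloid C -> fab_invariant a b C ->
  is_min_pr2 C L1 -> is_max_pr2 C L2 ->
  `|b| <= L2 - L1.
Proof.
move=> ha _ [[CA [_ [_ [U [V [hUV [hdisj [[[UA [OU [oOU eU]]] _]
  [[[VA [OV [oOV eV]]] _] [_ [_ [[MU hU] [MV hV]]]]]]]]]]]]] _] inv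
  [_ h1] [_ h2].
have key : exists x y, C (cyl x y) /\ sin (2 * pi * x) = 1.
  apply: contrapT => hno.
  pose g := fun y : R => cyl (1 / 4) y.
  have gUV : forall y, U (g y) \/ V (g y).
    move=> y; have : (Ann (R:=R) `\` C) (g y).
      split; first by exists (1/4), y.
      by move=> Cg; apply: hno; exists (1/4), y; split => //; exact: sin_quarter.
    by rewrite hUV => -[] ?; [left | right].
  have gc : continuous g by move=> y; exact: gcont.
  have conn : connected [set: R] by apply/connected_intervalP => x y _ _ z _.
  have AnnG : forall y, Ann (g y) by move=> y; exists (1/4), y.
  have UO : forall p, U p <-> Ann p /\ OU p by move=> p; rewrite eU.
  have VO : forall p, V p <-> Ann p /\ OV p by move=> p; rewrite eV.
  have hB := conn (g @^-1` OU).
  have : g @^-1` OU = setT.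
    rewrite hB //.
    - exists (MU + 1); have := hU (1/4) (MU + 1) (ltac:(lra)).
      by move/UO => [].
    - exists (g @^-1` OU); last by rewrite setTI.
      by apply: open_comp => // y _; exact: gc.
    - exists (~` (g @^-1` OV)); last first.
        rewrite setTI; apply/seteqP; split => y /=.
        + move=> hy hv.
          have : (U `&` V) (g y) by split; [apply/UO | apply/VO].
          by rewrite hdisj.
        + move=> hv; case: (gUV y) => [/UO [] //|/VO [] _ //].
      by apply: open_closedC; apply: open_comp => // y _; exact: gc.
  move=> hT.
  have hv := hV (1/4) (MV - 1) (ltac:(lra)).
  have : (g @^-1` OU) (MV - 1) by rewrite hT.
  move=> hu.
  have : (U `&` V) (g (MV - 1)) by split => //; apply/UO.
  by rewrite hdisj.
case: key => x [y [Cxy s1]].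
have Cq : C (cyl (Fab a b x y).1 (Fab a b x y).2).
  by rewrite -inv; exists x, y.
have e2 : (Fab a b x y).2 = y - b.
  by change (Fab a b x y).2 with (y - b * sin (2 * pi * x)); rewrite s1 mulr1.
have pc : forall u v : R, pr2 (cyl u v) = v by [].
have hq1 := h1 _ Cq; have hq2 := h2 _ Cq.
have hy1 := h1 _ Cxy; have hy2 := h2 _ Cxy.
rewrite pc e2 in hq1 hq2; rewrite pc in hy1 hy2.
rewrite ler_norml; apply/andP; split; lra.
Qed.
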